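(* In the setting described in the context, assume that there exists a capacity $\mu:2^{\mathcal C}\to L$ with $S_\mu(x^{(k)})=\alpha^{(k)}$ for all $k$ (equivalently, $(S)$ is consistent and $e(\mathcal C)=1$; equivalently, $(\Sigma)$ is consistent and $f(\emptyset)=0$). Define $\mu_e(\emptyset)=0$, $\mu_e(A)=e(A)$ for $A\neq\emptyset$, and $\mu_f(\mathcal C)=1$, $\mu_f(A)=f(A)$ for $A\subsetneq\mathcal C$. Then: (i) $\mu_e$ is a capacity representing the training data, and it is the greatest such capacity; (ii) $\mu_f$ is a capacity representing the training data, and it is the lowest such capacity; (iii) every capacity $\mu:2^{\mathcal C}\to L$ representing the training data satisfies $\mu_f\le\mu\le\mu_e$ (pointwise on $2^{\mathcal C}$).
   Context: Let $\mathcal C=\{1,\dots,n\}$ and let $L$ be either a finite totally ordered set $0=\xi_1<\dots<\xi_l=1$ or $L=[0,1]$. A capacity is a map $\mu:2^{\mathcal C}\to L$ with $\mu(\emptyset)=0$, $\mu(\mathcal C)=1$, monotone for inclusion. Sugeno integral: $S_\mu(x)=\max_{A\subseteq\mathcal C}\min(\min_{i\in A}x_i,\mu(A))$ with $\min_{i\in\emptyset}x_i=1$. A capacity represents the training data $(x^{(k)},\alpha^{(k)})_{1\le k\le N}$ ($x^{(k)}\in L^n$, $\alpha^{(k)}\in L$) if $S_\mu(x^{(k)})=\alpha^{(k)}$ for all $k$. For nonempty $A$, $m_{k,A}=\min_{i\in A}x^{(k)}_i$; for $A\subsetneq\mathcal C$, $\gamma_{k,A}=\max_{i\in\mathcal C\setminus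 A}x^{(k)}_i$. $(S)$: unknowns $\xi_A$ ($A\ne\emptyset$), equations $\max_{A\ne\emptyset}\min(m_{k,A},\xi_A)=\alpha^{(k)}$; $(\Sigma)$: unknowns $\xi_A$ ($A\subsetneq\mathcal C$), equations $\min_{A\subsetneq\mathcal C}\max(\gamma_{k,A},\xi_A)=\alpha^{(k)}$. Gödel implication $a\to_G b=1$ if $a\le b$, else $b$; epsilon product $a\,\epsilon\,b=b$ if $a<b$, else $0$. $e(A)=\min_k(m_{k,A}\to_G\alpha^{(k)})$, $f(B)=\max_k(\gamma_{k,B}\,\epsilon\,\alpha^{(k)})$. *)

(* Defs.v *)
From mathcomp Require Import all_boot all_order.
Set Implicit Arguments. Unset Strict Implicit. Unset Printing Implicit Defensive.
Import Order.TTheory.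
Local Open Scope order_scope.

(* L is a bounded chain: totally ordered with bottom 0 = \bot and top 1 = \top.
   Criteria C = 'I_n; training data indexed by 'I_N. *)
Section Sugeno.
Context {disp : Order.disp_t} {L : tbOrderType disp} {n N : nat}.

Definition capacity (mu : {set 'I_n} -> L) : Prop :=
  [/\ mu set0 = \bot, mu setT = \top &
      forall A B : {set 'I_n}, A \subset B -> mu A <= mu B].

Definition minA (x : 'I_n -> L) (A : {set 'I_n}) : L :=
  \big[Order.min/ \top]_(i in A) x i.

Definition maxC (x : 'I_n -> L) (A : {set 'I_n}) : L :=
  \big[Order.max/ \bot]_(i in ~: A) x i.

Definition sugeno (mu : {set 'I_n} -> L) (x : 'I_n -> L) : L :=
  \big[Order.max/ \bot]_(A : {set 'I_n}) Order.min (minA x A) (mu A).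

Definition represents (x : 'I_N -> 'I_n -> L) (alpha : 'I_N -> L)
  (mu : {set 'I_n} -> L) : Prop :=
  forall k, sugeno mu (x k) = alpha k.

Definition godel_imp (a b : L) : L := if a <= b then \top else b.
Definition eps_prod (a b : L) : L := if a < b then b else \bot.

Definition e_fun (x : 'I_N -> 'I_n -> L) (alpha : 'I_N -> L) (A : {set 'I_n}) : L :=
  \big[Order.min/ \top]_(k < N) godel_imp (minA (x k) A) (alpha k).

Definition f_fun (x : 'I_N -> 'I_n -> L) (alpha : 'I_N -> L) (B : {set 'I_n}) : L :=
  \big[Order.max/ \bot]_(k < N) eps_prod (maxC (x k) B) (alpha k).

Definition mu_e x alpha (A : {set 'I_n}) : L :=
  if A == set0 then \bot else e_fun x alpha A.

Definition mu_f x alpha (A : {set 'I_n}) : L :=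
  if A == setT then \top else f_fun x alpha A.

End Sugeno.

(* Main.v *)
Require Import Defs.
From mathcomp Require Import all_boot all_order.
Import Order.TTheory.
Local Open Scope order_scope.

Section Proofs.
Context {disp : Order.disp_t} {L : tbOrderType disp} {n N : nat}.
Implicit Types (y : 'I_n -> L) (A B : {set 'I_n}) (mu : {set 'I_n} -> L) (a b c : L).

Lemma minA_sub y A B : A \subset B -> Defs.minA y B <= Defs.minA y A.
Proof.
move=> sAB; apply: le_bigmin; first exact: lex1.
by move=> i iA; apply: bigmin_le_cond; exact: (subsetP sAB).
Qed.

Lemma maxC_sub y A B : A \subset B -> Defs.maxC y B <= Defs.maxC y A.
Proof.
move=> sAB; apply: bigmax_le; first exact: le0x.
move=> i; rewrite !inE => iB; apply: le_bigmax_cond; rewrite inE.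
by apply: contra iB; exact: (subsetP sAB).
Qed.

Lemma term_le mu y A : Order.min (Defs.minA y A) (mu A) <= sugeno mu y.
Proof. by rewrite /sugeno; apply: (bigmax_sup A). Qed.

Lemma sugeno_mono mu nu y : (forall A, mu A <= nu A) -> sugeno mu y <= sugeno nu y.
Proof.
move=> h; apply: le_bigmax2 => A _; apply: le_min2 => //.
Qed.

Lemma sugeno_dual mu y A : capacity mu -> sugeno mu y <= Order.max (Defs.maxC y A) (mu A).
Proof.
case=> _ _ mon; apply: bigmax_le; first exact: le0x.
move=> B _; case: (boolP (B \subset A)) => [sBA|].
  by rewrite ge_min; apply/orP; right; rewrite le_max (mon _ _ sBA) orbT.
case/subsetPn=> i iB iA; rewrite ge_min le_max; apply/orP; left; apply/orP; left.
apply: (@le_trans _ _ (y i)); first by rewrite /Defs.minA; apply: bigmin_le_cond.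
by rewrite /Defs.maxC; apply: le_bigmax_cond; rewrite inE.
Qed.

Lemma godel_adj a b c : Order.min a c <= b -> c <= godel_imp a b.
Proof.
rewrite /godel_imp; case: ifP => ab; first by rewrite lex1.
by rewrite ge_min ab.
Qed.

Lemma godel_min a b : Order.min a (godel_imp a b) <= b.
Proof. by rewrite /godel_imp; case: ifP => ab; rewrite ge_min ?ab ?lexx ?orbT. Qed.

Lemma godel_anti a (a' : L) b : a' <= a -> godel_imp a b <= godel_imp a' b.
Proof.
rewrite /godel_imp => h; case: ifP => ab; case: ifP => a'b //; rewrite ?lex1 ?lexx //.
by rewrite (le_trans h ab) in a'b.
Qed.

Lemma eps_anti a (a' : L) b : a' <= a -> eps_prod a b <= eps_prod a' b.
Proof.
rewrite /eps_prod => h; case: ifP => ab; case: ifP => a'b //; rewrite ?le0x ?lexx //.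
by rewrite (le_lt_trans h ab) in a'b.
Qed.

Variables (x : 'I_N -> 'I_n -> L) (alpha : 'I_N -> L).

Lemma upper mu : capacity mu -> represents x alpha mu -> forall A, mu A <= mu_e x alpha A.
Proof.
move=> [m0 m1 mon] rep A; rewrite /mu_e; case: eqP => [->|_]; first by rewrite m0.
apply: le_bigmin; first exact: lex1.
move=> k _; apply: godel_adj; rewrite -(rep k); exact: term_le.
Qed.

Lemma lower mu : capacity mu -> represents x alpha mu -> forall A, mu_f x alpha A <= mu A.
Proof.
move=> cap rep A; have [m0 m1 mon] := cap; rewrite /mu_f; case: eqP => [->|_]; first by rewrite m1.
apply: bigmax_le; first exact: le0x.
move=> k _; rewrite /eps_prod; case: ifP => h; last exact: le0x.
have := sugeno_dual mu (x k) A cap; rewrite rep le_max => /orP[] // h'.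
by rewrite lt_geF in h'.
Qed.

Hypothesis ex : exists mu : {set 'I_n} -> L, capacity mu /\ represents x alpha mu.

Lemma cap_e : capacity (mu_e x alpha).
Proof.
have [mu [[m0 m1 mon] rep]] := ex.
split; first by rewrite /mu_e eqxx.
  apply/eqP; rewrite eq_le lex1 -m1; exact: upper.
move=> A B sAB; rewrite /mu_e; case: eqP => [_|/eqP A0]; first exact: le0x.
case: eqP => [B0|_].
  by move: A0; rewrite B0 subset0 in sAB; rewrite (eqP sAB) eqxx.
apply: le_bigmin2 => k _; apply: godel_anti; exact: minA_sub.
Qed.

Lemma rep_e : represents x alpha (mu_e x alpha).
Proof.
have [mu [cap rep]] := ex.
move=> k; apply/eqP; rewrite eq_le; apply/andP; split; last first.
  by rewrite -{1}(rep k); apply: sugeno_mono; exact: upper.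
apply: bigmax_le; first exact: le0x.
move=> A _; rewrite /mu_e; case: eqP => _; first by rewrite ge_min le0x orbT.
apply: (le_trans _ (godel_min (Defs.minA (x k) A) (alpha k))); apply: le_min2 => //.
exact: bigmin_le.
Qed.

Lemma cap_f : capacity (mu_f x alpha).
Proof.
have [mu [cap rep]] := ex; have [m0 m1 mon] := cap.
split; last 1 first.
- move=> A B sAB; rewrite /mu_f; case: (eqVneq B setT) => [_|BT]; first exact: lex1.
  case: eqP => [AT|_].
    by move: BT; rewrite AT subTset in sAB; rewrite (eqP sAB) eqxx.
  apply: le_bigmax2 => k _; apply: eps_anti; exact: maxC_sub.
- apply/eqP; rewrite eq_le le0x -m0 andbT; exact: lower.
- by rewrite /mu_f eqxx.
Qed.

Lemma rep_f : represents x alpha (mu_f x alpha).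
Proof.
have [mu [cap rep]] := ex.
move=> k; apply/eqP; rewrite eq_le; apply/andP; split.
  by rewrite -(rep k); apply: sugeno_mono; exact: lower.
pose A := [set i | alpha k <= x k i].
apply: le_trans (term_le _ _ A); rewrite le_min; apply/andP; split.
  by apply: le_bigmin; [exact: lex1 | move=> i; rewrite inE].
rewrite /mu_f; case: eqP => _; first exact: lex1.
case: (eqVneq (alpha k) \bot) => [->|ak0]; first exact: le0x.
rewrite /f_fun; apply: (bigmax_sup k) => //.
rewrite /eps_prod.
suff -> : Defs.maxC (x k) A < alpha k by [].
apply/bigmax_ltP; split; first by rewrite lt_neqAle eq_sym ak0 le0x.
by move=> i; rewrite !inE ltNge.
Qed.

End Proofs.

Theorem corollary1 (disp : Order.disp_t) (L : tbOrderType disp) (n N : nat)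
  (x : 'I_N -> 'I_n -> L) (alpha : 'I_N -> L) :
  (exists mu : {set 'I_n} -> L, capacity mu /\ represents x alpha mu) ->
  [/\ (* (i) *)
      capacity (mu_e x alpha) /\ represents x alpha (mu_e x alpha)
      /\ (forall mu, capacity mu -> represents x alpha mu ->
            forall A, mu A <= mu_e x alpha A),
      (* (ii) *)
      capacity (mu_f x alpha) /\ represents x alpha (mu_f x alpha)
      /\ (forall mu, capacity mu -> represents x alpha mu ->
            forall A, mu_f x alpha A <= mu A) &
      (* (iii) *)
      forall mu : {set 'I_n} -> L, capacity mu -> represents x alpha mu ->
        forall A, mu_f x alpha A <= mu A <= mu_e x alpha A].
Proof.
move=> ex; split.
- by split; [exact: cap_e | split; [exact: rep_e | exact: upper]].
- by split; [exact: cap_f | split; [exact: rep_f | exact: lower]].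
- by move=> mu cap rep A; rewrite lower // upper.
Qed.
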